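(* Let $d,r$ be nonnegative integers such that $r\le\binom{m+d}{d}-r_d$. Then $e_{r+r_d}(d,m)=\overline{e}_r(d,m)$. In particular, $e_r(d,m)=\overline{e}_r(d,m)$ if $d\le q$.
   Context: Let $q$ be a prime power, $\mathbb{F}_q$ the finite field with $q$ elements, $m$ a positive integer. A monomial $\mu\neq1$ in $x_0,\dots,x_m$ written $x_0^{a_0}\cdots x_\ell^{a_\ell}$ with $a_\ell>0$ is projectively reduced if $a_0,\dots,a_{\ell-1}\le q-1$; $1$ is also projectively reduced; a polynomial is projectively reduced if it is an $\mathbb{F}_q$-linear combination of projectively reduced monomials. $r_d$ is the $\mathbb{F}_q$-dimension of the degree-$d$ homogeneous component of the ideal generated by $\{x_i^qx_j-x_ix_j^q:0\le i<j\le m\}$ (this ideal consists of the polynomials generated by homogeneous ones vanishing on $\mathbb{P}^m(\mathbb{F}_q)$; $r_d=0$ for $d\le q$). $e_s(d,m)$ is the maximum of $|V(F_1,\dots,F_s)(\mathbb{F}_q)|$ (the number of points of $\mathbb{P}^m(\mathbb{F}_q)$ where all $F_i$ vanish) over families of $s$ linearly independent homogeneous degree-$d$ polynomials; $\overline{e}_s(d,m)$ is the same maximum restricted to families of $s$ linearly independent projectively reduced homogeneous degree-$d$ polynomials. For $s=0$ the only family is the empty one, giving the value $|\mathbb{P}^m(\mathbb{F}_q)|$. *)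

(* Defs.v *)
From HB Require Import structures.
From mathcomp Require Import all_boot all_order all_algebra all_field.
From mathcomp Require Import mpoly.
Set Implicit Arguments. Unset Strict Implicit. Unset Printing Implicit Defensive.
Import GRing.Theory.
Local Open Scope ring_scope.

Section Defs.
Variables (F : finFieldType) (m : nat).
Local Notation P := {mpoly F[m.+1]}.

Definition qF : nat := #|F|.

(* homogeneous of degree d: every monomial in the support has total degree d
   (0 is homogeneous of every degree) *)
Definition homogd (d : nat) (p : P) : bool :=
  all (fun mm : 'X_{1..m.+1} => mdeg mm == d) (msupp p).

(* projectively reduced monomial x_0^{a_0}...x_l^{a_l}, a_l > 0 :
   a_0,...,a_{l-1} <= q-1, i.e. every exponent strictly before a positive
   exponent is <= q-1 (the monomial 1 is reduced vacuously) *)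
Definition proj_reduced_mon (mm : 'X_{1..m.+1}) : bool :=
  [forall i : 'I_m.+1, forall j : 'I_m.+1,
     ((i < j)%N && (0 < mm j)%N) ==> (mm i <= qF.-1)%N].

Definition proj_reduced (p : P) : bool :=
  all proj_reduced_mon (msupp p).

Definition lin_indep (s : nat) (fam : 'I_s -> P) : Prop :=
  forall c : 'I_s -> F, \sum_(i < s) c i *: fam i = 0 -> forall i, c i = 0.

(* points of P^m(F_q), represented by their normalized homogeneous
   coordinates: the first nonzero coordinate equals 1 *)
Definition proj_point (x : {ffun 'I_m.+1 -> F}) : bool :=
  [exists i : 'I_m.+1, (x i == 1) && [forall j : 'I_m.+1, (j < i)%N ==> (x j == 0)]].

Definition nb_zeros (s : nat) (fam : 'I_s -> P) : nat :=
  #|[set x : {ffun 'I_m.+1 -> F} | proj_point x &&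
      [forall i : 'I_s, (fam i).@[x] == 0]]|.

Definition is_e (s d v : nat) : Prop :=
  (exists fam : 'I_s -> P,
      lin_indep fam /\ (forall i, homogd d (fam i)) /\ nb_zeros fam = v) /\
  (forall fam : 'I_s -> P,
      lin_indep fam -> (forall i, homogd d (fam i)) -> (nb_zeros fam <= v)%N).

Definition is_ebar (s d v : nat) : Prop :=
  (exists fam : 'I_s -> P,
      lin_indep fam /\ (forall i, homogd d (fam i) && proj_reduced (fam i)) /\
      nb_zeros fam = v) /\
  (forall fam : 'I_s -> P,
      lin_indep fam -> (forall i, homogd d (fam i) && proj_reduced (fam i)) ->
      (nb_zeros fam <= v)%N).

Definition gens : seq P :=
  [seq 'X_(ij.1) ^+ qF * 'X_(ij.2) - 'X_(ij.1) * 'X_(ij.2) ^+ qF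
  | ij <- [seq ij : 'I_m.+1 * 'I_m.+1 <- enum [set: 'I_m.+1 * 'I_m.+1] | (ij.1 < ij.2)%N]].

Definition in_ideal (p : P) : Prop :=
  exists h : 'I_(size gens) -> P, p = \sum_(k < size gens) h k * gens`_k.

(* rd = r_d: the F_q-dimension of the degree-d homogeneous component of the
   ideal, i.e. of {p in ideal | p homogeneous of degree d} *)
Definition is_rd (d rd : nat) : Prop :=
  (exists fam : 'I_rd -> P,
      lin_indep fam /\ (forall i, in_ideal (fam i) /\ homogd d (fam i))) /\
  (forall (k : nat) (fam : 'I_k -> P),
      lin_indep fam -> (forall i, in_ideal (fam i) /\ homogd d (fam i)) ->
      (k <= rd)%N).

End Defs.

(* Main.v *)
From HB Require Import structures.
From mathcomp Require Import all_boot all_order all_algebra all_field.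
From mathcomp Require Import mpoly.
From Stdlib Require Import Lia.
From mathcomp Require Import zify.
From Stdlib Require Import Classical.
Require Import Defs.
Set Implicit Arguments. Unset Strict Implicit. Unset Printing Implicit Defensive.
Import GRing.Theory.
Local Open Scope ring_scope.

Section Indep.
Variable F : finFieldType.

Lemma poly_vanish_coef (C : nat -> F) :
  (forall t : F, \sum_(a < #|F|) C a * t ^+ a = 0) -> forall a, (a < #|F|)%N -> C a = 0.
Proof.
move=> H a la.
pose p := \poly_(i < #|F|) C i.
have p0 : p = 0.
  apply/eqP; apply/negP => /negP pn0.
  have := max_poly_roots pn0 (rs := enum F).
  rewrite enum_uniq -cardE => /(_ _ isT).
  have -> : all (root p) (enum F).
    by apply/allP => t _; rewrite /root horner_poly H.
  move=> /(_ isT) lt; have := size_poly #|F| C; by rewrite -/p leqNgt lt.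
by have := coef_poly #|F| C a; rewrite -/p p0 coef0 la => <-.
Qed.

Lemma indep_chart (n k : nat) : (k <= n)%N ->
  forall (s : seq 'X_{1..n}) (c : 'X_{1..n} -> F),
  uniq s ->
  (forall e, e \in s -> forall i : 'I_n, (i < k)%N -> (e i < #|F|)%N) ->
  {in s &, forall e e' : 'X_{1..n}, (forall i : 'I_n, (i < k)%N -> e i = e' i) -> e = e'} ->
  (forall y : 'I_n -> F, (forall i : 'I_n, (k <= i)%N -> y i = 1) ->
     \sum_(e <- s) c e * \prod_(i < n) y i ^+ e i = 0) ->
  forall e, e \in s -> c e = 0.
Proof.
elim: k => [|k IH] kn s c us hq hinj hv e es.
  have := hv (fun _ => 1) (fun _ _ => erefl).
  have p1 : forall e' : 'X_{1..n}, \prod_(i < n) (1 : F) ^+ e' i = 1.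
    by move=> e'; apply: big1 => i _; rewrite expr1n.
  rewrite (bigD1_seq e) //= p1 mulr1 big_seq_cond big1 ?addr0 //.
  move=> e' /andP [e's ne]; case/negP: ne; apply/eqP; exact: hinj.
pose K := Ordinal kn.
have claim : forall a : 'I_#|F|, forall y : 'I_n -> F,
    (forall i : 'I_n, (k <= i)%N -> y i = 1) ->
    \sum_(e <- s | e K == a) c e * \prod_(i < n) y i ^+ e i = 0.
  move=> a y hy.
  pose C := fun a : nat => \sum_(e <- s | e K == a) c e * \prod_(i < n) y i ^+ e i.
  have := @poly_vanish_coef C _ a (ltn_ord a); apply.
  move=> t.
  pose yt := fun i : 'I_n => if i == K then t else y i.
  transitivity (\sum_(e <- s) c e * \prod_(i < n) yt i ^+ e i); last first.
    apply: hv => i lki; rewrite /yt; have -> : (i == K) = false.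
      by apply/negbTE; apply/eqP => iK; move: lki; rewrite iK /= ltnn.
    by apply: hy; apply: ltnW.
  rewrite /C /yt.
  under eq_bigr do rewrite mulr_suml.
  rewrite (exchange_big_dep xpredT) //=.
  rewrite big_seq [RHS]big_seq; apply: eq_bigr => e' e's.
  have lq := hq e' e's K (ltnSn k).
  rewrite (bigD1 (Ordinal lq)) //= [X in _ + X]big1 ?addr0; last first.
    by move=> a' /andP [/eqP h na]; case/negP: na; apply/eqP/val_inj => /=; rewrite h.
  rewrite -mulrA; congr (_ * _).
  rewrite (bigD1 K) //= [in RHS](bigD1 K) //= eqxx hy ?leqnn // expr1n mul1r mulrC.
  congr (_ * _); apply: eq_bigr => i /negbTE ->; by [].
move=> {hv}.
have lq := hq e es K (ltnSn k).
pose a := Ordinal lq.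
have := IH (ltnW kn) [seq e' <- s | (e' : 'X_{1..n}) K == a] c.
apply.
- exact: filter_uniq.
- move=> e' /[!mem_filter] /andP [_ e's] i li; apply: hq => //; exact: ltnW.
- move=> e1 e2 /[!mem_filter] /andP [/eqP h1 e1s] /andP [/eqP h2 e2s] hag.
  apply: hinj => // i; rewrite ltnS leq_eqVlt => /orP [/eqP ik|]; last exact: hag.
  have -> : i = K by apply: val_inj.
  by rewrite h1 h2.
- by move=> y hy; rewrite big_filter; apply: claim.
- by rewrite mem_filter es eqxx.
Qed.

End Indep.

Section Work.
Variables (F : finFieldType) (m : nat).
Local Notation P := {mpoly F[m.+1]}.

Lemma q_gt1 : (1 < #|F|)%N.
Proof. apply/card_gt1P; exists 0, 1; split => //; by rewrite eq_sym oner_eq0. Qed.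

Lemma in_ideal0 : in_ideal (0 : P).
Proof. exists (fun _ => 0); by rewrite big1 // => k _; rewrite mul0r. Qed.

Lemma in_idealD (p1 p2 : P) : in_ideal p1 -> in_ideal p2 -> in_ideal (p1 + p2).
Proof.
move=> [h1 ->] [h2 ->]; exists (fun k => h1 k + h2 k); rewrite -big_split.
by apply: eq_bigr => k _; rewrite mulrDl.
Qed.

Lemma in_idealZ c (p : P) : in_ideal p -> in_ideal (c *: p).
Proof.
move=> [h ->]; exists (fun k => c *: h k); rewrite scaler_sumr.
by apply: eq_bigr => k _; rewrite scalerAl.
Qed.

Lemma in_idealB (p1 p2 : P) : in_ideal p1 -> in_ideal p2 -> in_ideal (p1 - p2).
Proof.
move=> h1 h2; rewrite -scaleN1r; apply: in_idealD => //; exact: in_idealZ.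
Qed.

Lemma in_ideal_sum (I : finType) (c : I -> F) (f : I -> P) :
  (forall i, in_ideal (f i)) -> in_ideal (\sum_i c i *: f i).
Proof.
move=> H; elim/big_ind: _ => //; [exact: in_ideal0 | exact: in_idealD |].
move=> i _; exact: in_idealZ.
Qed.

Lemma gens_vanish (x : 'I_m.+1 -> F) (g : P) : g \in gens F m -> g.@[x] = 0.
Proof.
case/mapP => ij _ ->.
by rewrite mevalB !mevalM !rmorphXn /= !mevalXU /qF !expf_card subrr.
Qed.

Lemma ideal_vanish (p : P) (x : 'I_m.+1 -> F) : in_ideal p -> p.@[x] = 0.
Proof.
case=> h ->; rewrite raddf_sum /=; apply: big1 => k _.
by rewrite mevalM (@gens_vanish x _ (mem_nth 0 (ltn_ord k))) mulr0.
Qed.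

Lemma gen_in_ideal (i j : 'I_m.+1) (nu : 'X_{1..m.+1}) : (i < j)%N ->
  in_ideal ('X_[nu] * ('X_i ^+ qF F * 'X_j - 'X_i * 'X_j ^+ qF F) : P).
Proof.
move=> lij.
set g := (_ - _ : P).
have gin : g \in gens F m.
  apply/mapP; exists (i, j) => //.
  by rewrite mem_filter /= lij mem_enum inE.
have lt : (index g (gens F m) < size (gens F m))%N by rewrite index_mem.
exists (fun k => if k == Ordinal lt then 'X_[nu] else 0).
rewrite (bigD1 (Ordinal lt)) //= eqxx big1 ?addr0; first by rewrite nth_index.
by move=> k /negbTE ->; rewrite mul0r.
Qed.

Definition wgt (mu : 'X_{1..m.+1}) := (\sum_(i < m.+1) mu i * (m - i))%N.

Lemma wgtD a b : wgt (a + b) = (wgt a + wgt b)%N.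
Proof. by rewrite /wgt -big_split; apply: eq_bigr => i _; rewrite mnmDE mulnDl. Qed.

Lemma wgtMn a c : wgt (a *+ c) = (wgt a * c)%N.
Proof.
by rewrite /wgt big_distrl; apply: eq_bigr => i _ /=; rewrite mulmnE mulnAC.
Qed.

Lemma wgt1 (k : 'I_m.+1) : wgt U_(k) = (m - k)%N.
Proof.
rewrite /wgt (bigD1 k) //= big1 ?addn0; first by rewrite mnm1E eqxx mul1n.
by move=> l /negbTE nkl; rewrite mnm1E eq_sym nkl mul0n.
Qed.

Lemma reduce_mon (mu : 'X_{1..m.+1}) : exists mu',
  [/\ @proj_reduced_mon F m mu', mdeg mu' = mdeg mu & in_ideal ('X_[mu] - 'X_[mu'] : P)].
Proof.
have q2 := q_gt1.
have [N lew] : exists N, (wgt mu <= N)%N by exists (wgt mu).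
elim: N mu lew => [|N IH] mu lew.
  case: (boolP (@proj_reduced_mon F m mu)) => [red|].
    by exists mu; split => //; rewrite subrr; exact: in_ideal0.
  rewrite /proj_reduced_mon negb_forall => /existsP [i]; rewrite negb_forall.
  move=> /existsP [j]; rewrite negb_imply => /andP [/andP [lij mj] mi].
  have : (mu i * (m - i) <= 0)%N.
    by apply: leq_trans lew; rewrite /wgt (bigD1 i) //= leq_addr.
  have : (mu j * (m - j) <= 0)%N.
    by apply: leq_trans lew; rewrite /wgt (bigD1 j) //= leq_addr.
  have := ltn_ord j; move: mi q2 lij; rewrite /qF; nia.
case: (boolP (@proj_reduced_mon F m mu)) => [red|].
  by exists mu; split => //; rewrite subrr; exact: in_ideal0.
rewrite /proj_reduced_mon negb_forall => /existsP [i]; rewrite negb_forall.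
move=> /existsP [j]; rewrite negb_imply => /andP [/andP [lij mj] mi].
have qi : (qF F <= mu i)%N by move: mi; rewrite /qF; lia.
have nij : i != j by apply/eqP => eij; move: lij; rewrite eij ltnn.
pose a := (U_(i) *+ qF F + U_(j))%MM.
pose b := (U_(i) + U_(j) *+ qF F)%MM.
pose nu := (mu - a)%MM.
have emu : mu = (nu + a)%MM.
  apply/mnmP => k; rewrite mnmDE mnmBE subnK // mnmDE mulmnE !mnm1E.
  case: (eqVneq i k) => [<-|nik]; first by rewrite mul1n eq_sym (negbTE nij) addn0.
  by case: (eqVneq j k) => [jk|_]; [rewrite -jk|]; rewrite mul0n.
have lw : (wgt (nu + b)%MM <= N)%N.
  move: lew; rewrite emu !wgtD !wgtMn !wgt1.
  have := ltn_ord j; move: q2 lij; rewrite /qF; nia.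
have [mu' [red' deg' id']] := IH (nu + b)%MM lw.
  exists mu'; split => //.
    by rewrite deg' emu !mdegD !mdegMn !mdeg1; lia.
  have -> : ('X_[mu] - 'X_[mu'] : P) =
    ('X_[nu] * ('X_i ^+ qF F * 'X_j - 'X_i * 'X_j ^+ qF F)) + ('X_[nu + b] - 'X_[mu']).
    rewrite {1}emu !mpolyXD !mpolyXn mulrBr !mulrA.
    by rewrite addrA subrK.
  by apply: in_idealD => //; exact: gen_in_ideal.
Qed.


Lemma meval_scale (d : nat) (f : P) (lam : F) (z : 'I_m.+1 -> F) : homogd d f ->
  f.@[fun i => lam * z i] = lam ^+ d * f.@[z].
Proof.
move=> /allP hf; rewrite !mevalE mulr_sumr big_seq [RHS]big_seq.
apply: eq_bigr => nu nus; rewrite mulrCA; congr (_ * _).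
rewrite (eq_bigr (fun i => lam ^+ nu i * z i ^+ nu i)) => [|i _]; last by rewrite exprMn.
by rewrite big_split /= prodrXr -mdegE (eqP (hf nu nus)).
Qed.

Lemma scale_vanish d (f : P) : homogd d f ->
  (forall x : {ffun 'I_m.+1 -> F}, proj_point x -> f.@[x] = 0) ->
  forall x : 'I_m.+1 -> F, (exists i, x i != 0) -> f.@[x] = 0.
Proof.
move=> hf hv x [i1 xi1].
case: (@arg_minnP _ i1 (fun i => x i != 0) (fun i : 'I_m.+1 => nat_of_ord i) xi1) => i0 xi0 min0.
pose lam := x i0.
pose z := [ffun j => lam^-1 * x j].
have zp : proj_point z.
  apply/existsP; exists i0; rewrite ffunE mulVf // eqxx /=.
  apply/forallP => j; apply/implyP => lj.
  rewrite ffunE; case: (eqVneq (x j) 0) => [->|nz]; first by rewrite mulr0.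
  by have := min0 j nz; rewrite leqNgt lj.
have -> : f.@[x] = f.@[fun j => lam * z j].
  by apply: meval_eq => j; rewrite ffunE mulrA mulfV // mul1r.
by rewrite (meval_scale _ _ hf) hv // mulr0.
Qed.

Section Chart.
Variables (d : nat) (f : P).
Hypotheses (hf : homogd d f) (hr : proj_reduced f)
  (hv : forall x : 'I_m.+1 -> F, (exists i, x i != 0) -> f.@[x] = 0).

Lemma chart_step l (lm : (l < m.+1)%N) :
  (forall mu : 'X_{1..m.+1}, (forall j : 'I_m.+1, (l <= j)%N -> mu j = 0%N) ->
      (0 < l)%N -> f@_mu = 0) ->
  forall mu : 'X_{1..m.+1}, (forall j : 'I_m.+1, (l < j)%N -> mu j = 0%N) -> f@_mu = 0.
Proof.
move=> IHl mu hmu.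
have hf' := allP hf; have hr' := allP hr.
pose L := Ordinal lm.
pose sel (nu : 'X_{1..m.+1}) := [forall j : 'I_m.+1, (l < j)%N ==> (nu j == 0%N)].
pose s := [seq nu <- msupp f | sel nu].
have selP nu : sel nu -> forall j : 'I_m.+1, (l < j)%N -> nu j = 0%N.
  by move=> /forallP H j lj; apply/eqP; exact: (implyP (H j) lj).
have key : forall nu, nu \in s -> f@_nu = 0.
  apply: (@indep_chart F m.+1 l (ltnW lm) s (fun nu => f@_nu)).
  - exact/filter_uniq/msupp_uniq.
  - move=> nu /[!mem_filter] /andP [snu nus] i li.
    have lpos : (0 < l)%N by case: (l) li.
    have nuL : (0 < nu L)%N.
      rewrite lt0n; apply/negP => /eqP nuL0.
      move: nus; rewrite mcoeff_msupp IHl ?eqxx //.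
      move=> j; rewrite leq_eqVlt => /orP [/eqP lj|]; last exact: selP.
      by have -> : j = L by apply: val_inj.
    have := hr' nu nus => /forallP /(_ i) /forallP /(_ L).
    rewrite /= li nuL /= /qF => h.
    by apply: (leq_ltn_trans h); rewrite ltn_predL; apply: ltnW; apply: q_gt1.
  - move=> nu nu' /[!mem_filter] /andP [snu nus] /andP [snu' nus'] hag.
    have hoth : forall j : 'I_m.+1, j != L -> nu j = nu' j.
      move=> j jL; case: (ltngtP j l) => [jl|lj|jl]; first exact: hag.
        by rewrite !selP.
      by case/negP: jL; apply/eqP/val_inj.
    apply/mnmP => j; case: (eqVneq j L) => [->|]; last exact: hoth.
    move: (eqP (hf' nu nus)) (eqP (hf' nu' nus')); rewrite /= !mdegE.
    rewrite [\sum_i nu i](bigD1 L) //= [\sum_i nu' i](bigD1 L) //=.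
    rewrite (eq_bigr (fun j => nu' j)); last by move=> j0 /hoth.
    lia.
  - move=> y hy.
    pose x := fun i : 'I_m.+1 => if (l < i)%N then 0 else y i.
    have xL : x L = 1 by rewrite /x /= ltnn hy.
    transitivity (f.@[x]); last by apply: hv; exists L; rewrite xL oner_eq0.
    rewrite mevalE [RHS](bigID sel) /= [X in _ = _ + X]big1 ?addr0; last first.
      move=> nu /=; rewrite /sel negb_forall => /existsP [j]; rewrite negb_imply.
      move=> /andP [lj nj]; rewrite (bigD1 j) //= /x lj expr0n.
      by rewrite (negbTE nj) mul0r mulr0.
    rewrite -[RHS]big_filter -/s big_seq [RHS]big_seq; apply: eq_bigr => nu /[!mem_filter] /andP [snu _].
    congr (_ * _); apply: eq_bigr => i _; rewrite /x.
    by case: ltnP => // li; rewrite selP // !expr0.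
case: (boolP (mu \in msupp f)) => [mus|]; last by rewrite mcoeff_msupp negbK => /eqP.
apply: key; rewrite mem_filter mus andbT; apply/forallP => j; apply/implyP => lj.
by rewrite hmu.
Qed.

Lemma red_zero : f = 0.
Proof.
suff H : forall l, (l < m.+1)%N -> forall mu : 'X_{1..m.+1},
    (forall j : 'I_m.+1, (l < j)%N -> mu j = 0%N) -> f@_mu = 0.
  apply/mpolyP => mu; rewrite mcoeff0; apply: (H m) => // j lj.
  by have := ltn_ord j; lia.
elim=> [|l IH] lm.
  by apply: (chart_step lm).
apply: (chart_step lm) => mu hmu _; apply: IH; first exact: ltnW.
by move=> j lj; apply: hmu.
Qed.

End Chart.


Section Vec.
Variable d : nat.
Local Notation V := (dhomog m.+1 F d).

Lemma homogdE (p : P) : homogd d p = (p \is d.-homog).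
Proof. by rewrite dhomogE. Qed.

Definition toV (p : P) : V := insubd (0 : V) p.

Lemma toVK (p : P) : homogd d p -> val (toV p) = p.
Proof. by move=> h; rewrite insubdK // -homogdE. Qed.

Lemma valV (v : V) : homogd d (val v).
Proof. by rewrite homogdE; case: v. Qed.

Lemma val_lin n (k : 'I_n -> F) (X : 'I_n -> V) :
  val (\sum_i k i *: X i) = \sum_i k i *: val (X i).
Proof. by rewrite linear_sum /=. Qed.

Lemma meval_lin n (k : 'I_n -> F) (X : 'I_n -> P) (x : 'I_m.+1 -> F) :
  (\sum_i k i *: X i).@[x] = \sum_i k i * (X i).@[x].
Proof. rewrite raddf_sum; apply: eq_bigr => i _; exact: mevalZ. Qed.

Lemma span_vanish (X : seq V) (x : 'I_m.+1 -> F) :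
  (forall v, v \in X -> (val v).@[x] = 0) ->
  forall v, v \in <<X>>%VS -> (val v).@[x] = 0.
Proof.
move=> H v vX; rewrite (coord_span (X := in_tuple X) vX) val_lin meval_lin.
by apply: big1 => i _; rewrite H ?mulr0 // mem_nth.
Qed.

Lemma indep_prefix (X : seq V) r : free X -> (r <= size X)%N ->
  lin_indep (fun i : 'I_r => val X`_i).
Proof.
case: r => [|r] fX rX c hc i; first by case: i.
pose k := fun j : 'I_(size X) => if (j < r.+1)%N then c (inord j) else 0.
have hk : \sum_(j < size X) k j *: X`_j = 0.
  transitivity (\sum_(j < size X | (j < r.+1)%N) c (inord j) *: X`_j).
    rewrite [RHS]big_mkcond /=; apply: eq_bigr => j _; rewrite /k; case: ifP => _ //.
    by rewrite scale0r.
  rewrite -(big_ord_widen _ (fun j => c (inord j) *: X`_j) rX).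
  apply: val_inj; rewrite val_lin linear0 -[RHS]hc; apply: eq_bigr => j _.
  by rewrite inord_val.
have := (@freeP _ _ _ (in_tuple X) fX) k hk (widen_ord rX i).
by rewrite /k /= ltn_ord inord_val.
Qed.

Lemma free_of_indep s (fam : 'I_s -> P) : (forall i, homogd d (fam i)) ->
  lin_indep fam -> free [tuple toV (fam i) | i < s].
Proof.
move=> hh hi; apply/freeP => k hk i; apply: (hi k) => //.
have := congr1 val hk; rewrite linear0.
rewrite (eq_bigr (fun i => k i *: toV (fam i))) => [|j _]; last by rewrite nth_mktuple.
  rewrite val_lin => h; rewrite -[RHS]h.
  under [RHS]eq_bigr => j _ do rewrite toVK //.
  by [].
Qed.

Lemma toV_lin n (k : 'I_n -> F) (X : 'I_n -> P) : (forall i, homogd d (X i)) ->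
  toV (\sum_i k i *: X i) = \sum_i k i *: toV (X i).
Proof.
move=> hh; apply: val_inj; rewrite val_lin toVK.
  by apply: eq_bigr => i _; rewrite toVK.
rewrite homogdE; apply: rpred_sum => i _; apply: rpredZ; rewrite -homogdE; exact: hh.
Qed.

Lemma vexpand (v : V) : v = \sum_(mu <- msupp (val v)) (val v)@_mu *: toV 'X_[mu].
Proof.
apply: val_inj; rewrite {1}(mpolyE (val v)) linear_sum /=.
apply: eq_big_seq => mu mus /=; congr (_ *: _); rewrite toVK //.
by rewrite homogdE dhomogX; exact: (allP (valV v) mu mus).
Qed.

Definition monsd := [seq s2m t | t : d.-tuple 'I_m.+1 <- enum (basis m.+1 d)].

Definition RedS := [seq toV 'X_[mu] | mu <- monsd & @proj_reduced_mon F m mu].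
Definition RedV := <<RedS>>%VS.

Lemma RedV_red v : v \in RedV -> proj_reduced (val v).
Proof.
move=> vR; rewrite (coord_span (X := in_tuple RedS) vR) val_lin.
apply/allP => mu; rewrite mcoeff_msupp; apply: contraR => nr.
rewrite raddf_sum; apply/eqP; apply: big1 => i _; rewrite /= mcoeffZ.
have : RedS`_i \in RedS by rewrite mem_nth.
case/mapP => mu' /[!mem_filter] /andP [red' mon'] ->.
rewrite toVK ?mcoeffX; last by rewrite homogdE dhomogX basis_cover.
case: eqP => [e|]; last by rewrite mulr0.
by move: red'; rewrite e (negbTE nr).
Qed.

Lemma red_RedV v : proj_reduced (val v) -> v \in RedV.
Proof.
move=> hr; rewrite (vexpand v) big_seq; apply: memv_suml => mu mus; apply: memvZ.
apply: memv_span; apply/mapP; exists mu => //; rewrite mem_filter (allP hr mu mus) /=.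
by rewrite -basis_cover; exact: (allP (valV v) mu mus).
Qed.

Section Ideal.
Variables (rd : nat) (B : 'I_rd -> P).
Hypotheses (hBind : lin_indep B) (hBi : forall i, in_ideal (B i) /\ homogd d (B i))
  (hmax : forall k (fam : 'I_k -> P), lin_indep fam ->
     (forall i, in_ideal (fam i) /\ homogd d (fam i)) -> (k <= rd)%N).

Definition BT := [tuple toV (B i) | i < rd].
Definition UV := <<BT>>%VS.

Lemma freeBT : free BT.
Proof. exact: (free_of_indep (fun i => (hBi i).2) hBind). Qed.

Lemma dimUV : \dim UV = rd.
Proof. by rewrite /UV (eqP freeBT) size_tuple. Qed.

Lemma UV_vanish (x : 'I_m.+1 -> F) v : v \in UV -> (val v).@[x] = 0.
Proof.
apply: span_vanish => w /tnthP [j ->]; rewrite tnth_mktuple toVK; last exact: (hBi j).2.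
exact: ideal_vanish (hBi j).1.
Qed.

Lemma ideal_in_UV v : in_ideal (val v) -> v \in UV.
Proof.
move=> hv; apply/negPn/negP => nv.
have fr : free (v :: BT) by rewrite free_cons nv freeBT.
suff : (size (v :: BT) <= rd)%N.
  by rewrite /= size_map size_enum_ord ltnn.
apply: hmax (indep_prefix fr (leqnn _)) _.
move=> i; split; last exact: valV.
have : (v :: BT)`_i \in v :: BT by apply: mem_nth.
rewrite inE => /orP [/eqP -> //|/tnthP [j ->]]; rewrite tnth_mktuple toVK //.
  exact: (hBi j).1.
exact: (hBi j).2.
Qed.

Lemma cap0 : (RedV :&: UV)%VS = 0%VS.
Proof.
apply/eqP; rewrite -subv0; apply/subvP => v; rewrite memv_cap memv0 => /andP [vR vU].
have h0 : val v = 0 := red_zero (valV v) (RedV_red vR) (fun x _ => UV_vanish x vU).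
by apply/eqP; apply: val_inj; rewrite h0 linear0.
Qed.

Lemma sum_full : (RedV + UV)%VS = fullv.
Proof.
apply/eqP; rewrite eqEsubv subvf /=; apply/subvP => v _.
rewrite (vexpand v) big_seq; apply: memv_suml => mu mus; apply: memvZ.
have [mu' [red' deg' id']] := reduce_mon mu.
have hmu : mdeg mu = d by apply/eqP; exact: (allP (valV v) mu mus).
have h1 : homogd d ('X_[mu] : P) by rewrite homogdE dhomogX; apply/eqP.
have h2 : homogd d ('X_[mu'] : P).
  by rewrite homogdE dhomogX; apply/eqP; exact: (etrans deg' hmu).
have h3 : homogd d ('X_[mu] - 'X_[mu'] : P).
  by rewrite homogdE rpredB // -homogdE.
have -> : toV 'X_[mu] = toV 'X_[mu'] + toV ('X_[mu] - 'X_[mu']).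
  by apply: val_inj; rewrite /= !toVK // addrC subrK.
apply: memv_add.
  apply: memv_span; apply/mapP; exists mu' => //; rewrite mem_filter red' /=.
  by rewrite -basis_cover; apply/eqP; exact: (etrans deg' hmu).
by apply: ideal_in_UV; rewrite toVK.
Qed.

Lemma dimRed : \dim RedV = ('C(d + m, d) - rd)%N.
Proof.
have := dimv_sum_cap RedV UV; rewrite sum_full cap0 dimv0 dimvf dimUV addn0 => h.
have h' : 'C(d + m, d) = (\dim RedV + rd)%N := h.
by rewrite h' addnK.
Qed.

Lemma ebar_exists r : (r <= 'C(m + d, d) - rd)%N ->
  exists G : 'I_r -> P, lin_indep G /\ (forall i, homogd d (G i) && proj_reduced (G i)).
Proof.
move=> hr; pose X := vbasis RedV.
have fX : free X := basis_free (vbasisP RedV).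
have sX : (r <= size X)%N by rewrite size_tuple dimRed addnC.
exists (fun i : 'I_r => val X`_i); split; first exact: indep_prefix.
move=> i; rewrite valV /=; apply: RedV_red; apply: vbasis_mem; apply: mem_nth.
exact: leq_trans (ltn_ord i) sX.
Qed.


Lemma upper r (fam : 'I_(r + rd) -> P) : lin_indep fam -> (forall i, homogd d (fam i)) ->
  exists G : 'I_r -> P, [/\ lin_indep G,
    (forall i, homogd d (G i) && proj_reduced (G i)) & (nb_zeros fam <= nb_zeros G)%N].
Proof.
move=> hi hh.
pose FT := [tuple toV (fam i) | i < r + rd].
pose W := <<FT>>%VS.
have dW : \dim W = (r + rd)%N by rewrite /W (eqP (free_of_indep hh hi)) size_tuple.
pose S := ((W + UV) :&: RedV)%VS.
have dS : (r <= \dim S)%N.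
  have := dimv_sum_cap (W + UV) RedV; rewrite -/S dimRed => h.
  have h1 : (\dim (W + UV + RedV) <= 'C(d + m, d))%N.
    by have := dimvS (subvf (W + UV + RedV)); rewrite dimvf.
  have h2 : (r + rd <= \dim (W + UV))%N by rewrite -dW; apply: dimvS; exact: addvSl.
  have h3 : (rd <= 'C(d + m, d))%N.
    by have := dimvS (subvf UV); rewrite dimvf dimUV.
  lia.
pose X := vbasis S.
have fX : free X := basis_free (vbasisP S).
have sX : (r <= size X)%N by rewrite size_tuple.
have XS : forall i : 'I_r, X`_i \in S.
  move=> i; apply: vbasis_mem; apply: mem_nth; exact: leq_trans (ltn_ord i) sX.
exists (fun i : 'I_r => val X`_i); split; first exact: indep_prefix.
  move=> i; rewrite valV /=; apply: RedV_red.
  by have := XS i; rewrite memv_cap => /andP [].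
apply: subset_leq_card; apply/subsetP => x; rewrite !inE => /andP [px /forallP hx].
rewrite px /=; apply/forallP => i; apply/eqP.
have := XS i; rewrite memv_cap => /andP [/memv_addP [w wW [u uU ->]] _].
rewrite /= mevalD (UV_vanish _ uU) addr0.
apply: (span_vanish _ wW) => v /tnthP [j ->]; rewrite tnth_mktuple toVK //.
by move/eqP: (hx j).
Qed.

Lemma lower r (G : 'I_r -> P) : lin_indep G ->
  (forall i, homogd d (G i) && proj_reduced (G i)) ->
  exists H : 'I_(r + rd) -> P, [/\ lin_indep H, (forall i, homogd d (H i)) &
    nb_zeros H = nb_zeros G].
Proof.
move=> hi hh.
pose H := fun i : 'I_(r + rd) => match split i with inl j => G j | inr j => B j end.
have HL : forall j, H (lshift rd j) = G j.
  move=> j; rewrite /H; case: splitP => k /= e; first by congr G; apply: val_inj.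
  by have := ltn_ord j; rewrite e; lia.
have HR : forall j, H (rshift r j) = B j.
  move=> j; rewrite /H; case: splitP => k /= e.
    by have := ltn_ord k; rewrite -e; lia.
  by congr B; apply: val_inj => /=; lia.
have Hsp : forall i, (exists j, i = lshift rd j) \/ (exists j, i = rshift r j).
  move=> i; rewrite -(splitK i); case: (split i) => j /=; [left|right]; by exists j.
exists H; split.
- move=> c hc.
  rewrite big_split_ord /= in hc.
  set gs := \sum_(j < r) c (lshift rd j) *: H (lshift rd j) in hc.
  set bs := \sum_(j < rd) c (rshift r j) *: H (rshift r j) in hc.
  have egs : gs = \sum_(j < r) c (lshift rd j) *: G j.
    by apply: eq_bigr => j _; rewrite HL.
  have ebs : bs = \sum_(j < rd) c (rshift r j) *: B j.
    by apply: eq_bigr => j _; rewrite HR.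
  have hG : forall j, homogd d (G j) by move=> j; case/andP: (hh j).
  have hB : forall j, homogd d (B j) by move=> j; exact: (hBi j).2.
  have gs0 : gs = 0.
    have : toV gs \in (RedV :&: UV)%VS.
      rewrite memv_cap; apply/andP; split.
        rewrite egs toV_lin //; apply: memv_suml => j _; apply: memvZ.
        by apply: red_RedV; rewrite toVK //; case/andP: (hh j).
      have -> : gs = \sum_(j < rd) (- c (rshift r j)) *: B j.
        have -> : gs = - bs by apply/eqP; rewrite -addr_eq0 hc.
        by rewrite ebs -sumrN; apply: eq_bigr => j _; rewrite scaleNr.
      rewrite toV_lin //; apply: memv_suml => j _; apply: memvZ.
      by apply: memv_span; rewrite -(tnth_mktuple (fun i => toV (B i))); exact: mem_tnth.
    rewrite cap0 memv0 => /eqP h0.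
    have : val (toV gs) = gs.
      by rewrite toVK // egs homogdE; apply: rpred_sum => j _; apply: rpredZ; rewrite -homogdE.
    by rewrite h0 linear0.
  have cl : forall j, c (lshift rd j) = 0 by apply: hi; rewrite -egs.
  have cr : forall j, c (rshift r j) = 0.
    by apply: hBind; rewrite -ebs; move: hc; rewrite gs0 add0r.
  by move=> i; case: (Hsp i) => [[j ->]|[j ->]].
- move=> i; case: (Hsp i) => [[j ->]|[j ->]]; rewrite ?HL ?HR.
    by case/andP: (hh j).
  exact: (hBi j).2.
apply: eq_card => x; rewrite !inE; congr (_ && _); apply/forallP/forallP => h i.
  by rewrite -HL; exact: h.
case: (Hsp i) => [[j ->]|[j ->]]; rewrite ?HL ?HR; first exact: h.
by apply/eqP; apply: ideal_vanish; exact: (hBi j).1.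
Qed.

End Ideal.
End Vec.


Lemma all_red_small d (mu : 'X_{1..m.+1}) : (d <= #|F|)%N -> mdeg mu = d ->
  @proj_reduced_mon F m mu.
Proof.
move=> hd hmu; apply/forallP => i; apply/forallP => j; apply/implyP => /andP [lij mj].
have : (mu i + mu j <= mdeg mu)%N.
  rewrite mdegE (bigD1 i) //= (bigD1 j) /=; last by rewrite eq_sym neq_ltn lij.
  by rewrite addnA leq_addr.
rewrite hmu /qF; lia.
Qed.

Lemma ex_max (Pn : nat -> Prop) (b : nat) : (exists n, Pn n) ->
  (forall n, Pn n -> (n <= b)%N) -> exists n, Pn n /\ forall k, Pn k -> (k <= n)%N.
Proof.
elim: b => [|b IH] [n pn] hb.
  exists n; split => // k pk; have := hb k pk; have := hb n pn; lia.
case: (classic (Pn b.+1)) => [pb|npb].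
  by exists b.+1; split.
apply: IH; first by exists n.
move=> k pk; have := hb k pk; rewrite leq_eqVlt => /orP [/eqP e|//].
by rewrite e in pk.
Qed.

End Work.

Theorem theorem5p2 (F : finFieldType) (m : nat) (hm : (0 < m)%N) :
  (forall (d r rd : nat), is_rd F m d rd ->
     (r <= 'C(m + d, d) - rd)%N ->
     exists v : nat, is_e F m (r + rd) d v /\ is_ebar F m r d v) /\
  (forall (d r : nat), (d <= qF F)%N -> (r <= 'C(m + d, d))%N ->
     exists v : nat, is_e F m r d v /\ is_ebar F m r d v).
Proof.
have part1 : forall (d r rd : nat), is_rd F m d rd ->
     (r <= 'C(m + d, d) - rd)%N ->
     exists v : nat, is_e F m (r + rd) d v /\ is_ebar F m r d v.
  move=> d r rd [[B [hBind hBi]] hmax] hr.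
  pose Pn n := exists fam : 'I_r -> {mpoly F[m.+1]}, lin_indep fam /\
    (forall i, homogd d (fam i) && proj_reduced (fam i)) /\ nb_zeros fam = n.
  have [v [[G [hGi [hGh hGz]]] vmax]] : exists v, Pn v /\ forall k, Pn k -> (k <= v)%N.
    apply: (@ex_max Pn #|{ffun 'I_m.+1 -> F}|).
      have [G [hGi hGh]] := ebar_exists hBind hBi hmax hr.
      by exists (nb_zeros G), G.
    by move=> n [fam [_ [_ <-]]]; exact: max_card.
  exists v; split; last first.
    split; first by exists G.
    by move=> fam hi hh; apply: vmax; exists fam.
  split.
    have [H [hHi hHh hHz]] := lower hBind hBi hGi hGh.
    by exists H; rewrite hHz.
  move=> fam hi hh.
  have [G' [hi' hh' hz']] := upper hBind hBi hmax hi hh.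
  by apply: leq_trans hz' _; apply: vmax; exists G'.
split; first exact: part1.
move=> d r hd hr.
have rd0 : is_rd F m d 0.
  split.
    by exists (fun i : 'I_0 => 0); split; [move=> c _ [] | case].
  move=> k fam hi hh; case: k fam hi hh => // k fam hi hh; exfalso.
  pose i0 : 'I_k.+1 := ord0.
  have [hid hhom] := hh i0.
  have hz : fam i0 = 0.
    apply: (red_zero hhom); last by move=> x _; exact: ideal_vanish.
    apply/allP => mu mus; apply: (@all_red_small F m d) => //.
    by move/eqP: (allP hhom mu mus).
  have hs : \sum_i ((i == i0)%:R : F) *: fam i = 0.
    rewrite (bigD1 i0) //= big1 ?addr0 ?eqxx ?scale1r ?hz //.
    by move=> i /negbTE ->; rewrite scale0r.
  by have := hi _ hs i0; rewrite eqxx => /eqP; rewrite oner_eq0.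
have := part1 d r 0 rd0; rewrite subn0 addn0; exact.
Qed.
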